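(* Let $\Phi$ be a finite crystallographic root system and let $\Psi,\Psi'\subseteq\Phi^+$ be such that $\operatorname{ord}(\beta,\gamma)=2$ for all $\beta\in\Psi$ and $\gamma\in\Psi'$. Then the families of random variables $\{\mathcal{X}_\beta\}_{\beta\in\Psi}$ and $\{\mathcal{X}_\gamma\}_{\gamma\in\Psi'}$ are independent.
   Context: $\Phi$ is a finite crystallographic root system with positive roots $\Phi^+$ and Weyl group $W$; $s_\beta$ is the reflection in $\beta$ and $\operatorname{ord}(\beta,\gamma)=\min\{k>0:(s_\beta s_\gamma)^k=e\}$ (so $\operatorname{ord}(\beta,\gamma)=2$ means $\beta\ne\gamma$ are orthogonal). For $\beta\in\Phi^+$, $\mathcal{X}_\beta$ is the Bernoulli random variable on $W$ with the uniform distribution, $\mathcal{X}_\beta(w)=1$ if $w(\beta)\in-\Phi^+$ and $0$ otherwise. *)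

(* Defs.v *)
From HB Require Import structures.
From mathcomp Require Import all_boot all_order all_algebra.
From mathcomp Require Import reals.
Set Implicit Arguments. Unset Strict Implicit. Unset Printing Implicit Defensive.
Import Order.TTheory GRing.Theory Num.Theory.
Local Open Scope ring_scope.

Section RootSystems.
Variables (R : realType) (n : nat).

Definition dotv (u v : 'rV[R]_n) : R := (u *m v^T) 0 0.

(* Matrix of the reflection s_a (acting on row vectors by v |-> v *m s_a):
   v *m refl_mx a = v - (2 (v,a)/(a,a)) a. *)
Definition refl_mx (a : 'rV[R]_n) : 'M[R]_n :=
  1%:M - (2 / dotv a a) *: (a^T *m a).

Definition root_system (Phi : seq 'rV[R]_n) : Prop :=
  [/\ uniq Phi,
      0 \notin Phi,
      (forall a b, a \in Phi -> b \in Phi -> b *m refl_mx a \in Phi),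
      (forall a b, a \in Phi -> b \in Phi -> 2 * dotv a b / dotv a a \in Num.int) &
      (forall a (c : R), a \in Phi -> c *: a \in Phi -> c = 1 \/ c = -1)].

(* A vector h is regular for Phi if it is orthogonal to no root; the positive
   system determined by h is Phi^+ = {a in Phi | (h,a) > 0}. *)
Definition regular (Phi : seq 'rV[R]_n) (h : 'rV[R]_n) : Prop :=
  forall a, a \in Phi -> dotv h a != 0.

Definition pos_roots (Phi : seq 'rV[R]_n) (h : 'rV[R]_n) : seq 'rV[R]_n :=
  [seq a <- Phi | 0 < dotv h a].

Definition weyl (Phi : seq 'rV[R]_n) (w : 'M[R]_n) : Prop :=
  exists s : seq 'rV[R]_n, all (mem Phi) s /\ w = foldr mulmx 1%:M (map refl_mx s).

Definition ord_eq (b g : 'rV[R]_n) (k : nat) : Prop :=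
  [/\ (0 < k)%N,
      (refl_mx b *m refl_mx g) ^+ k = 1%:M &
      forall j, (0 < j < k)%N -> (refl_mx b *m refl_mx g) ^+ j != 1%:M].

Definition Xrv (Phi : seq 'rV[R]_n) (h : 'rV[R]_n) (b : 'rV[R]_n)
    (w : 'M[R]_n) : nat :=
  nat_of_bool (b *m w \in [seq - a | a <- pos_roots Phi h]).

(* Uniform probability on the finite set enumerated (without repetition) by Wl. *)
Definition unif_prob (Wl : seq 'M[R]_n) (E : pred 'M[R]_n) : R :=
  (count E Wl)%:R / (size Wl)%:R.

(* The families {X_b}_{b in Psi} and {X_g}_{g in Psi'} are independent under
   the uniform distribution on Wl: every event in the sigma-algebra generated by
   the first family (= preimage of a set of value-vectors) is independent of
   every event in the sigma-algebra generated by the second. *)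
Definition indep_families (Wl : seq 'M[R]_n) (X : 'rV[R]_n -> 'M[R]_n -> nat)
    (Psi Psi' : seq 'rV[R]_n) : Prop :=
  forall (F G : seq nat -> bool),
    let A := fun w => F [seq X b w | b <- Psi] in
    let B := fun w => G [seq X g w | g <- Psi'] in
    unif_prob Wl (fun w => A w && B w) = unif_prob Wl A * unif_prob Wl B.

End RootSystems.

(* Main.v *)
Require Import Defs.
From HB Require Import structures.
From mathcomp Require Import all_boot all_order all_algebra.
From mathcomp Require Import reals ring lra.
Import Order.TTheory GRing.Theory Num.Theory.
Local Open Scope ring_scope.
Set Implicit Arguments. Unset Strict Implicit. Unset Printing Implicit Defensive.

Section Basic.
Variables (R : realType) (n : nat).
Implicit Types (u v a b c : 'rV[R]_n).

Lemma dotvE u v : dotv u v = \sum_i u 0 i * v 0 i.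
Proof. by rewrite /dotv !mxE; apply: eq_bigr => i _; rewrite mxE. Qed.

Lemma dotvC u v : dotv u v = dotv v u.
Proof. by rewrite !dotvE; apply: eq_bigr => i _; rewrite mulrC. Qed.

Lemma dotvDl u v c : dotv (u + v) c = dotv u c + dotv v c.
Proof. by rewrite !dotvE -big_split; apply: eq_bigr => i _; rewrite mxE mulrDl. Qed.

Lemma dotvNl u c : dotv (- u) c = - dotv u c.
Proof. by rewrite !dotvE -sumrN; apply: eq_bigr => i _; rewrite mxE mulNr. Qed.

Lemma dotvBl u v c : dotv (u - v) c = dotv u c - dotv v c.
Proof. by rewrite dotvDl dotvNl. Qed.

Lemma dotvZl (k : R) u c : dotv (k *: u) c = k * dotv u c.
Proof. by rewrite !dotvE mulr_sumr; apply: eq_bigr => i _; rewrite mxE mulrA. Qed.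

Lemma dotvDr u v c : dotv c (u + v) = dotv c u + dotv c v.
Proof. by rewrite dotvC dotvDl !(dotvC c). Qed.
Lemma dotvBr u v c : dotv c (u - v) = dotv c u - dotv c v.
Proof. by rewrite dotvC dotvBl !(dotvC c). Qed.
Lemma dotvZr (k : R) u c : dotv c (k *: u) = k * dotv c u.
Proof. by rewrite dotvC dotvZl dotvC. Qed.

Lemma dotv_mulmx u v (M : 'M[R]_n) : dotv u (v *m M) = dotv (u *m M^T) v.
Proof. by rewrite /dotv trmx_mul mulmxA. Qed.

Lemma dotv_ge0 u : 0 <= dotv u u.
Proof. by rewrite dotvE; apply: sumr_ge0 => i _; rewrite -expr2 sqr_ge0. Qed.

Lemma dotv_gt0 u : u != 0 -> 0 < dotv u u.
Proof.
move=> nz; rewrite lt_def dotv_ge0 andbT; apply: contra nz => /eqP.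
move/eqP; rewrite dotvE psumr_eq0 => [/allP H|i _]; last by rewrite -expr2 sqr_ge0.
apply/eqP/rowP => i; rewrite mxE; apply/eqP.
by have := H i (mem_index_enum _); rewrite /= -expr2 sqrf_eq0.
Qed.

Lemma refl_vec v a : v *m refl_mx a = v - (2 / dotv a a * dotv v a) *: a.
Proof.
rewrite /refl_mx mulmxBr mulmx1 -scalemxAr mulmxA.
rewrite [v *m a^T]mx11_scalar mul_scalar_mx scalerA.
by congr (_ - _ *: _); rewrite /dotv.
Qed.

Lemma refl_sym a : (refl_mx a)^T = refl_mx a.
Proof. by rewrite /refl_mx linearB /= linearZ /= trmx_mul trmxK tr_scalar_mx. Qed.

Lemma refl_orth v a : dotv v a = 0 -> v *m refl_mx a = v.
Proof. by move=> H; rewrite refl_vec H mulr0 scale0r subr0. Qed.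

Lemma refl_self a : a != 0 -> a *m refl_mx a = - a.
Proof.
move=> nz; rewrite refl_vec divfK; last by rewrite gt_eqF ?dotv_gt0.
by rewrite scaler_nat mulr2n opprD addrA subrr sub0r.
Qed.

Lemma refl_invol v a : a != 0 -> v *m refl_mx a *m refl_mx a = v.
Proof.
move=> nz; rewrite [v *m _]refl_vec mulmxBl -scalemxAl refl_self //.
by rewrite refl_vec scalerN opprK subrK.
Qed.

Lemma refl_mx_invol a : a != 0 -> refl_mx a *m refl_mx a = 1%:M.
Proof.
move=> nz; apply/row_matrixP => i; rewrite -[refl_mx a *m _]mul1mx mulmxA !row_mul.
by rewrite refl_invol.
Qed.

End Basic.

Lemma count_sum (T : Type) (P : pred T) (s : seq T) :
  count P s = \sum_(x <- s) (P x : nat).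
Proof. by elim: s => [|x s IH]; rewrite ?big_nil ?big_cons //= IH. Qed.

Lemma count_le_map (T : eqType) (s : seq T) (f : T -> T) (P Q : pred T) :
  uniq s -> {in s &, injective f} ->
  (forall v, v \in s -> P v -> f v \in s /\ Q (f v)) ->
  (count P s <= count Q s)%N.
Proof.
move=> us inj H; rewrite -!size_filter -(size_map f [seq x <- s | P x]).
apply: uniq_leq_size.
  rewrite map_inj_in_uniq ?filter_uniq // => x y.
  by rewrite !mem_filter => /andP[_ xs] /andP[_ ys]; apply: inj.
move=> y /mapP[x]; rewrite mem_filter => /andP[Px xs] ->.
by have [fs Qf] := H x xs Px; rewrite mem_filter Qf fs.
Qed.

Lemma count_lt (T : eqType) (s : seq T) (P Q : pred T) x :
  {in s, forall v, P v -> Q v} -> x \in s -> Q x -> ~~ P x ->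
  (count P s < count Q s)%N.
Proof.
move=> sub xs Qx nPx.
have E1 : count P s = count P [seq v <- s | Q v].
  rewrite count_filter; apply: eq_in_count => v vs /=.
  by case Pv: (P v); rewrite ?andbF // (sub v vs Pv).
have E2 : count Q s = size [seq v <- s | Q v] by rewrite size_filter.
rewrite E1 E2 -(count_predC P [seq v <- s | Q v]) -{1}[count P _]addn0 ltn_add2l.
by rewrite -has_count; apply/hasP; exists x; rewrite // mem_filter Qx.
Qed.

Section Counting.
Variables (T : eqType) (s : seq T) (K : eqType) (sig1 sig2 : T -> K).
Variables (c0 c1 c2 : nat).
Hypothesis hc : forall u u', u \in s -> u' \in s ->
  count (fun v => (sig1 v == sig1 u) && (sig2 v == sig2 u')) s = c0.
Hypothesis hc1 : forall u, u \in s -> count (fun v => sig1 v == sig1 u) s = c1.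
Hypothesis hc2 : forall u, u \in s -> count (fun v => sig2 v == sig2 u) s = c2.

Lemma indep_count (A B : pred T) :
  {in s &, forall u v, sig1 u = sig1 v -> A u = A v} ->
  {in s &, forall u v, sig2 u = sig2 v -> B u = B v} ->
  (c0 * count A s * count B s = c1 * c2 * count (predI A B) s)%N.
Proof.
move=> hA hB.
have LA : forall v, v \in s ->
    (\sum_(u <- s) (A u * (sig1 v == sig1 u)) = A v * c1)%N.
  move=> v vs; rewrite -(hc1 vs) count_sum big_distrr /=.
  apply: eq_big_seq => u us; rewrite [_ == sig1 u]eq_sym; case: eqP => [e|_]; last by rewrite !muln0.
  by rewrite (hA u v us vs e).
have LB : forall v, v \in s ->
    (\sum_(u <- s) (B u * (sig2 v == sig2 u)) = B v * c2)%N.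
  move=> v vs; rewrite -(hc2 vs) count_sum big_distrr /=.
  apply: eq_big_seq => u us; rewrite [_ == sig2 u]eq_sym; case: eqP => [e|_]; last by rewrite !muln0.
  by rewrite (hB u v us vs e).
have -> : (c0 * count A s * count B s = count A s * count B s * c0)%N by ring.
rewrite !count_sum big_distrlr /= big_distrl /=.
transitivity (\sum_(u <- s) \sum_(u' <- s) \sum_(v <- s)
   ((A u * (sig1 v == sig1 u)) * (B u' * (sig2 v == sig2 u'))))%N.
  apply: eq_big_seq => u us; rewrite big_distrl /=; apply: eq_big_seq => u' u's.
  rewrite -(hc us u's) count_sum !big_distrr /=; apply: eq_bigr => v _.
  rewrite -!mulnb; ring.
under eq_bigr do rewrite exchange_big /=.
rewrite exchange_big /=.
rewrite big_distrr /=; apply: eq_big_seq => v vs.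
rewrite -big_distrlr /= LA // LB //=; rewrite -mulnb; ring.
Qed.
End Counting.

Section Weyl.
Variables (R : realType) (n : nat).
Implicit Types (u v a b c x : 'rV[R]_n).

Definition Kmx (s : seq 'rV[R]_n) : 'M[R]_n := foldr mulmx 1%:M (map (@refl_mx R n) s).

Lemma Kmx_cat s1 s2 : Kmx (s1 ++ s2) = Kmx s1 *m Kmx s2.
Proof.
elim: s1 => [|a s1 IH] /=; first by rewrite mul1mx.
by rewrite /Kmx /= -/(Kmx _) IH mulmxA.
Qed.

Lemma Kmx_closed (Tp : pred 'rV[R]_n) (S : pred 'rV[R]_n) s x :
  (forall a y, S a -> Tp y -> Tp (y *m refl_mx a)) -> all S s -> Tp x ->
  Tp (x *m Kmx s).
Proof.
move=> H; elim: s x => [|a s IH] x /=; first by rewrite mulmx1.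
move=> /andP[Sa As] Tx; rewrite /Kmx /= -/(Kmx _) mulmxA.
by apply: IH => //; apply: H.
Qed.

Lemma Kmx_inv s : all (fun a => a != 0) s -> Kmx (rev s) *m Kmx s = 1%:M.
Proof.
elim: s => [|a s IH] /=; first by rewrite mulmx1.
move=> /andP[nz As]; rewrite rev_cons -cats1 Kmx_cat /Kmx /= -/(Kmx _) mulmx1.
by rewrite -mulmxA (mulmxA (refl_mx a)) refl_mx_invol // mul1mx IH.
Qed.

End Weyl.

Lemma sign_lemma (R : realType) (p q : R) :
  p != 0 -> q != 0 -> (0 < p) != (0 < q) -> p * q < 0.
Proof.
move=> p0 q0; have [hp|hp|hp] := ltgtP p 0.
- by rewrite nmulr_rlt0 //; case: (0 < q).
- rewrite pmulr_rlt0 // => /= nq.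
  by rewrite lt_neqAle q0 /= leNgt.
- by move: p0; rewrite hp eqxx.
Qed.

Lemma dist_refl (R : realType) (n : nat) (y z a : 'rV[R]_n) :
  a != 0 -> dotv y a * dotv z a < 0 ->
  dotv (y *m refl_mx a - z) (y *m refl_mx a - z) < dotv (y - z) (y - z).
Proof.
move=> nz H; have s0 : 0 < dotv a a by apply: dotv_gt0.
rewrite refl_vec.
have -> : y - (2 / dotv a a * dotv y a) *: a - z =
          (y - z) - (2 / dotv a a * dotv y a) *: a by rewrite addrAC.
rewrite !(dotvBl, dotvBr, dotvZl, dotvZr) (dotvC a y) (dotvC a z) (dotvC z y).
move: H s0; set p := dotv y a; set q := dotv z a; set s := dotv a a => H s0.
rewrite -subr_lt0.
set E := (X in X < _).
have -> : E = 4 * (p * q * s^-1) by rewrite /E; field; rewrite gt_eqF.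
rewrite pmulr_rlt0 // nmulr_rlt0 //; by rewrite invr_gt0.
Qed.

Section Main.
Variables (R : realType) (n : nat) (Phi : seq 'rV[R]_n) (h : 'rV[R]_n)
  (Wl : seq 'M[R]_n).
Hypotheses (rs : root_system Phi) (reg : regular Phi h) (uW : uniq Wl)
  (hW : forall w, w \in Wl <-> weyl Phi w).

Lemma root_nz a : a \in Phi -> a != 0.
Proof. by case: rs => _ H0 _ _ _ aP; apply/eqP => e; move: H0; rewrite -e aP. Qed.

Lemma root_refl a b : a \in Phi -> b \in Phi -> b *m refl_mx a \in Phi.
Proof. by case: rs => _ _ H _ _; apply: H. Qed.

Lemma root_neg a : a \in Phi -> - a \in Phi.
Proof. by move=> aP; rewrite -refl_self ?root_nz // root_refl. Qed.

Lemma Wl_K (S : pred 'rV[R]_n) s w : {subset S <= Phi} -> all S s ->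
  w \in Wl -> Kmx s *m w \in Wl.
Proof.
move=> SP As /hW [s0 [A0 ->]]; apply/hW; exists (s ++ s0); split.
  by rewrite all_cat A0 andbT; apply/allP => x /(allP As) /SP.
by change (Kmx s *m Kmx s0 = Kmx (s ++ s0)); rewrite Kmx_cat.
Qed.

Lemma Wl_refl a w : a \in Phi -> w \in Wl -> refl_mx a *m w \in Wl.
Proof.
move=> aP wW; have := @Wl_K (mem Phi) [:: a] w (fun x xP => xP).
by rewrite /Kmx /= mulmx1 aP; apply.
Qed.

Lemma one_Wl : 1%:M \in Wl.
Proof. by apply/hW; exists [::]. Qed.

Lemma Wl_root a w : a \in Phi -> w \in Wl -> a *m w \in Phi.
Proof.
move=> aP /hW [s0 [A0 ->]]; rewrite -[foldr _ _ _]/(Kmx s0).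
apply: (@Kmx_closed _ _ (mem Phi) (mem Phi)) => // b y bP yP.
exact: root_refl.
Qed.

Lemma reg_w a w : a \in Phi -> w \in Wl -> dotv h (a *m w) != 0.
Proof. by move=> aP wW; apply: reg; apply: Wl_root. Qed.

Definition sig (S : seq 'rV[R]_n) (w : 'M[R]_n) :=
  [seq (0 < dotv h (a *m w)) | a <- S].

Lemma trans_sig (S : seq 'rV[R]_n) t w : {subset S <= Phi} ->
  t \in Wl -> w \in Wl ->
  exists s, all (mem S) s /\ sig S (Kmx s *m w) = sig S t.
Proof.
move=> SP tW.
pose y (M : 'M[R]_n) := h *m M^T.
pose d M := dotv (y M - y t) (y M - y t).
have hy : forall a M, dotv h (a *m M) = dotv (y M) a.
  by move=> a M; rewrite dotv_mulmx.
have yr : forall a M, y (refl_mx a *m M) = y M *m refl_mx a.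
  by move=> a M; rewrite /y trmx_mul refl_sym mulmxA.
have step : forall w, w \in Wl -> sig S w != sig S t -> exists a,
   [/\ a \in S, refl_mx a *m w \in Wl &
     (count (fun v => d v < d (refl_mx a *m w))%R Wl <
      count (fun v => d v < d w)%R Wl)%N].
  move=> w0 w0W ne.
  have : ~~ all (fun a => (0 < dotv h (a *m w0)) == (0 < dotv h (a *m t))) S.
    apply: contra ne => /allP H; apply/eqP/eq_in_map => a aS; exact/eqP/H.
  move=> /allPn [a aS hne]; have aP := SP a aS.
  have w'W := Wl_refl aP w0W.
  have lt : d (refl_mx a *m w0) < d w0.
    rewrite /d yr; apply: dist_refl; first exact: root_nz.
    by rewrite -!hy; apply: sign_lemma => //; apply: reg_w.
  exists a; split => //.
  apply: (count_lt (x := refl_mx a *m w0)) => //; last by rewrite ltxx.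
  by move=> v _ /lt_trans; apply.
suff: forall k w, w \in Wl ->
    (count (fun v => d v < d w)%R Wl <= k)%N ->
    exists s, all (mem S) s /\ sig S (Kmx s *m w) = sig S t.
  by move=> H wW; apply: (H _ w wW (leqnn _)).
elim=> [|k IH] w0 w0W hk;
  (case: (boolP (sig S w0 == sig S t)) => [/eqP e | ne];
   first by exists [::]; rewrite /Kmx /= mul1mx).
- have [a [_ _ lt]] := step w0 w0W ne.
  by move: lt; rewrite leqn0 in hk; rewrite (eqP hk) ltn0.
- have [a [aS aW lt]] := step w0 w0W ne.
  have [s [sS e]] := IH _ aW (leq_trans lt hk).
  exists (s ++ [:: a]); split; first by rewrite all_cat sS /= aS.
  by rewrite Kmx_cat /Kmx /= mulmx1 -mulmxA.
Qed.

Lemma fiber_le (S1 S2 : seq 'rV[R]_n) u t u' :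
  {subset S1 <= Phi} ->
  (forall a x, a \in S1 -> x \in S1 -> x *m refl_mx a \in S1) ->
  (forall a c, a \in S1 -> c \in S2 -> dotv c a = 0) ->
  u \in Wl -> t \in Wl ->
  (count (fun v => (sig S1 v == sig S1 u) && (sig S2 v == sig S2 u')) Wl <=
   count (fun v => (sig S1 v == sig S1 t) && (sig S2 v == sig S2 u')) Wl)%N.
Proof.
move=> S1P cl orth uW' tW.
have [s [sS e]] := @trans_sig S1 t u S1P tW uW'.
apply: (@count_le_map _ _ (fun v => Kmx s *m v)) => //.
  move=> v1 v2 _ _ E; have := congr1 (mulmx (Kmx (rev s))) E.
  rewrite !mulmxA Kmx_inv ?mul1mx //.
  by apply/allP => a /(allP sS) aS; apply: root_nz; apply: S1P.
move=> v vW /andP[/eqP e1 /eqP e2]; split.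
  by apply: (@Wl_K (mem S1)) => //; move=> x xS; apply: S1P.
apply/andP; split; apply/eqP.
  rewrite -e; apply/eq_in_map => a aS /=; rewrite !mulmxA.
  have aK : a *m Kmx s \in S1.
    by apply: (@Kmx_closed _ _ (mem S1) (mem S1)) => // b y bS yS; apply: cl.
  by have /eq_in_map E1 := e1; apply: E1.
rewrite -e2; apply/eq_in_map => c cS /=; rewrite mulmxA.
have -> // : c *m Kmx s = c.
apply/eqP; apply: (@Kmx_closed _ _ (fun x => x == c) (mem S1)) => // b y bS /eqP ->.
by rewrite refl_orth ?orth.
Qed.

Lemma fiber_eq (S1 S2 : seq 'rV[R]_n) u t u' :
  {subset S1 <= Phi} ->
  (forall a x, a \in S1 -> x \in S1 -> x *m refl_mx a \in S1) ->
  (forall a c, a \in S1 -> c \in S2 -> dotv c a = 0) ->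
  u \in Wl -> t \in Wl ->
  count (fun v => (sig S1 v == sig S1 u) && (sig S2 v == sig S2 u')) Wl =
  count (fun v => (sig S1 v == sig S1 t) && (sig S2 v == sig S2 u')) Wl.
Proof. by move=> *; apply/eqP; rewrite eqn_leq !fiber_le. Qed.

Lemma dotvNr (u v : 'rV[R]_n) : dotv u (- v) = - dotv u v.
Proof. by rewrite dotvC dotvNl dotvC. Qed.

Lemma Xrv_E b w : b \in Phi -> w \in Wl ->
  Xrv Phi h b w = ~~ (0 < dotv h (b *m w)).
Proof.
move=> bP wW; rewrite /Xrv; congr nat_of_bool.
have nz := reg_w bP wW; have xP := Wl_root bP wW.
apply/mapP/idP.
  case=> a; rewrite mem_filter => /andP[ha _] ->.
  by rewrite dotvNr oppr_gt0 -leNgt le_eqVlt ha orbT.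
move=> H; exists (- (b *m w)); last by rewrite opprK.
by rewrite mem_filter root_neg // andbT dotvNr oppr_gt0 lt_neqAle nz /= leNgt.
Qed.

Lemma ord_orth b g : b \in pos_roots Phi h -> g \in pos_roots Phi h ->
  ord_eq b g 2 -> dotv g b = 0.
Proof.
rewrite !mem_filter => /andP[hb bP] /andP[hg gP] [_ E2 E1].
have M1 : refl_mx b *m refl_mx g != 1%:M by have := E1 1%N isT; rewrite expr1.
have bnz := root_nz bP; have gnz := root_nz gP.
have comm : g *m refl_mx b *m refl_mx g = g *m refl_mx g *m refl_mx b.
  rewrite expr2 -mulmxE in E2.
  have := congr1 (mulmx (g *m refl_mx g *m refl_mx b)) E2.
  by rewrite mulmx1 !mulmxA !refl_invol.
rewrite [g *m refl_mx b]refl_vec mulmxBl -scalemxAl !refl_self // mulNmx in comm.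
rewrite [b *m refl_mx g]refl_vec refl_vec in comm.
move: comm; set c := 2 / dotv b b * dotv g b; set c' := 2 / dotv g g * dotv b g.
move=> comm.
have [c0|cn0] := eqVneq c 0.
  move/eqP: c0; rewrite /c !mulf_eq0 invr_eq0 pnatr_eq0 /= gt_eqF ?dotv_gt0 //=.
  by move/eqP.
pose k := (2 * c)^-1 * (c * c').
have bk : b = k *: g.
  apply/rowP => i; rewrite mxE.
  have := congr1 (fun M : 'rV[R]_n => M 0 i) comm; rewrite /= !mxE => Ei.
  have H2 : (2 * c) * b 0 i = c * c' * g 0 i by nra.
  by rewrite /k -mulrA -H2 mulKf // mulf_neq0 // pnatr_eq0.
case: rs => _ _ _ _ Hred.
have := Hred g k gP; rewrite -bk => /(_ bP) [k1|k1].
  by move: M1; rewrite bk k1 scale1r refl_mx_invol // eqxx.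
move: hb; rewrite bk k1 dotvZr mulN1r oppr_gt0 => hb.
by have := Order.POrderTheory.lt_trans hb hg; rewrite ltxx.
Qed.

Lemma main_indep (Psi Psi' : seq 'rV[R]_n) :
  all (mem (pos_roots Phi h)) Psi ->
  all (mem (pos_roots Phi h)) Psi' ->
  (forall b g, b \in Psi -> g \in Psi' -> ord_eq b g 2) ->
  indep_families Wl (Xrv Phi h) Psi Psi'.
Proof.
move=> HP HP' Ho F G A B.
have posP : {subset pos_roots Phi h <= Phi}.
  by move=> x; rewrite mem_filter => /andP[].
pose S2 := [seq c <- Phi | all (fun b => dotv c b == 0) Psi].
pose S1 := [seq a <- Phi | all (fun c => dotv a c == 0) S2].
have S1P : {subset S1 <= Phi} by move=> x; rewrite mem_filter => /andP[].
have S2P : {subset S2 <= Phi} by move=> x; rewrite mem_filter => /andP[].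
have cl1 : forall a x, a \in S1 -> x \in S1 -> x *m refl_mx a \in S1.
  move=> a x; rewrite !mem_filter => /andP[oa aP] /andP[ox xP].
  rewrite root_refl // andbT; apply/allP => c cS.
  by rewrite refl_vec dotvBl dotvZl (eqP (allP oa c cS)) (eqP (allP ox c cS)) mulr0 subr0.
have cl2 : forall a x, a \in S2 -> x \in S2 -> x *m refl_mx a \in S2.
  move=> a x; rewrite !mem_filter => /andP[oa aP] /andP[ox xP].
  rewrite root_refl // andbT; apply/allP => c cS.
  by rewrite refl_vec dotvBl dotvZl (eqP (allP oa c cS)) (eqP (allP ox c cS)) mulr0 subr0.
have o12 : forall a c, a \in S1 -> c \in S2 -> dotv c a = 0.
  by move=> a c; rewrite mem_filter => /andP[oa _] cS; rewrite dotvC; apply/eqP/(allP oa).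
have o21 : forall c a, c \in S2 -> a \in S1 -> dotv a c = 0.
  by move=> c a cS aS; rewrite dotvC; apply: o12.
have PsiS1 : {subset Psi <= S1}.
  move=> b bPsi; rewrite mem_filter (posP _ (allP HP b bPsi)) andbT.
  apply/allP => c; rewrite mem_filter => /andP[oc _].
  by rewrite dotvC; apply: (allP oc).
have Psi'S2 : {subset Psi' <= S2}.
  move=> g gPsi; rewrite mem_filter (posP _ (allP HP' g gPsi)) andbT.
  apply/allP => b bPsi; apply/eqP; apply: ord_orth; last exact: Ho.
    exact: (allP HP).
  exact: (allP HP').
have o0 : forall a c, a \in S1 -> c \in [::] -> dotv c a = 0 by [].
have o0' : forall a c, a \in S2 -> c \in [::] -> dotv c a = 0 by [].
pose cnt (T1 T2 : seq 'rV[R]_n) u u' :=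
  count (fun v => (sig T1 v == sig T1 u) && (sig T2 v == sig T2 u')) Wl.
have hc : forall u u', u \in Wl -> u' \in Wl ->
    cnt S1 S2 u u' = cnt S1 S2 1%:M 1%:M.
  move=> u u' uW' u'W.
  rewrite /cnt (@fiber_eq S1 S2 u 1%:M u' S1P cl1 o12 uW' one_Wl).
  rewrite (eq_count (a2 := fun v => (sig S2 v == sig S2 u') && (sig S1 v == sig S1 1%:M)));
    last by move=> v; rewrite andbC.
  rewrite (@fiber_eq S2 S1 u' 1%:M 1%:M S2P cl2 o21 u'W one_Wl).
  by apply: eq_count => v; rewrite andbC.
have hc1 : forall u, u \in Wl -> count (fun v => sig S1 v == sig S1 u) Wl =
    count (fun v => sig S1 v == sig S1 1%:M) Wl.
  move=> u uW'.
  have := @fiber_eq S1 [::] u 1%:M u S1P cl1 o0 uW' one_Wl.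
  by rewrite /sig /= !(eq_count (fun v => andbT _)).
have hc2 : forall u, u \in Wl -> count (fun v => sig S2 v == sig S2 u) Wl =
    count (fun v => sig S2 v == sig S2 1%:M) Wl.
  move=> u uW'.
  have := @fiber_eq S2 [::] u 1%:M u S2P cl2 o0' uW' one_Wl.
  by rewrite /sig /= !(eq_count (fun v => andbT _)).
have hA : {in Wl &, forall u v, sig S1 u = sig S1 v -> A u = A v}.
  move=> u v uW' vW e; rewrite /A; congr F; apply/eq_in_map => b bPsi.
  have bP : b \in Phi by apply: posP; apply: (allP HP).
  rewrite !Xrv_E //; congr (nat_of_bool (~~ _)).
  by have /eq_in_map E1 := e; apply: E1; apply: PsiS1.
have hB : {in Wl &, forall u v, sig S2 u = sig S2 v -> B u = B v}.
  move=> u v uW' vW e; rewrite /B; congr G; apply/eq_in_map => b bPsi.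
  have bP : b \in Phi by apply: posP; apply: (allP HP').
  rewrite !Xrv_E //; congr (nat_of_bool (~~ _)).
  by have /eq_in_map E1 := e; apply: E1; apply: Psi'S2.
have H1 := indep_count hc hc1 hc2 hA hB.
have H0 := indep_count hc hc1 hc2 (A := predT) (B := predT) (fun _ _ _ _ _ => erefl) (fun _ _ _ _ _ => erefl).
have eP : count (predI predT predT) Wl = size Wl.
  by rewrite -(count_predT Wl); apply: eq_count.
have eT : forall (T : eqType) (s : seq T), count predT s = size s.
  by move=> T; elim=> //= x s ->.
rewrite !eT in H0.
set c0 := cnt S1 S2 1%:M 1%:M in H1 H0.
set c1 := count _ Wl in H1 H0.
set c2 := count (fun v => sig S2 v == sig S2 1%:M) Wl in H1 H0.
have N0 : (0 < size Wl)%N by case: Wl one_Wl.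
have c00 : (0 < c0)%N.
  rewrite /c0 /cnt -has_count; apply/hasP; exists 1%:M; first exact: one_Wl.
  by rewrite !eqxx.
have key : (c0 * size Wl * (count A Wl * count B Wl) =
           c0 * size Wl * (size Wl * count (predI A B) Wl))%N.
  transitivity (size Wl * (c1 * c2 * count (predI A B) Wl))%N.
    by rewrite -H1; ring.
  transitivity (c1 * c2 * size Wl * count (predI A B) Wl)%N; first by ring.
  by rewrite -H0; ring.
have key2 : (count A Wl * count B Wl = size Wl * count (predI A B) Wl)%N.
  have pos : (0 < c0 * size Wl)%N by rewrite muln_gt0 c00 N0.
  by apply/eqP; rewrite -(eqn_pmul2l pos) key.
rewrite /unif_prob.
have -> : count (fun w => A w && B w) Wl = count (predI A B) Wl by [].
have Nn : (size Wl)%:R != 0 :> R by rewrite pnatr_eq0 -lt0n.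
rewrite mulrACA -natrM key2 natrM.
by field.
Qed.

End Main.

Theorem theorem3p4 (R : realType) (n : nat) (Phi : seq 'rV[R]_n)
    (h : 'rV[R]_n) (Wl : seq 'M[R]_n) (Psi Psi' : seq 'rV[R]_n) :
  root_system Phi ->
  regular Phi h ->
  uniq Wl ->
  (forall w, w \in Wl <-> weyl Phi w) ->
  all (mem (pos_roots Phi h)) Psi ->
  all (mem (pos_roots Phi h)) Psi' ->
  (forall b g, b \in Psi -> g \in Psi' -> ord_eq b g 2) ->
  indep_families Wl (Xrv Phi h) Psi Psi'.
Proof.
move=> rs reg uW hW HP HP' Ho.
exact: (main_indep rs reg uW hW HP HP' Ho).
Qed.
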